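(* Let $L$ be a C-lattice domain in which every element is a join of principal elements. If $L$ is sharp, then $L$ is pseudo-Dedekind, i.e. $(x:a)$ is a principal element whenever $x,a\in L$ and $x$ is principal.
   Context: A multiplicative lattice is a complete lattice $(L,\le)$ with bottom $0$ and top $1$ which is also a commutative monoid with identity $1$ such that $a(\bigvee_\alpha b_\alpha)=\bigvee_\alpha(ab_\alpha)$ for all $a,b_\alpha\in L$. For $x,y\in L$, $(y:x)=\bigvee\{a\in L: ax\le y\}$. An element $c$ is compact if $c\le\bigvee S$ implies $c\le\bigvee T$ for some finite $T\subseteq S$. A C-lattice is a multiplicative lattice in which $1$ is compact, the product of two compact elements is compact, and every element is a join of compact elements. A proper element $p\ne1$ is prime if $xy\le p$ implies $x\le p$ or $y\le p$; $L$ is a domain if $0$ is prime. An element $x$ is principal if $y\wedge zx=((y:x)\wedge z)x$ and $y\vee(z:x)=((yx\vee z):x)$ for all $y,z\in L$. $L$ is sharp if whenever $a_1a_2\le b$ with $a_1,a_2,b\in L$, there exist $b_1,b_2\in L$ with $a_i\le b_i$ ($i=1,2$) and $b=b_1b_2$. *)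

(* Defs.v *)
From Stdlib Require Import List.


Record mlattice := MLattice {
  car :> Type;
  le : car -> car -> Prop;
  sup : (car -> Prop) -> car;
  mul : car -> car -> car;
  one : car;
  le_refl : forall x, le x x;
  le_trans : forall x y z : car, le x y -> le y z -> le x z;
  le_antisym : forall x y, le x y -> le y x -> x = y;
  sup_ub : forall (S : car -> Prop) x, S x -> le x (sup S);
  sup_least : forall (S : car -> Prop) y, (forall x, S x -> le x y) -> le (sup S) y;
  one_top : forall x, le x one;
  mulC : forall x y, mul x y = mul y x;
  mulA : forall x y z, mul x (mul y z) = mul (mul x y) z;
  mul1 : forall x, mul one x = x;
  mul_sup : forall a (S : car -> Prop),
      mul a (sup S) = sup (fun y => exists b, S b /\ y = mul a b)
}.

Arguments le {m}. Arguments sup {m}. Arguments mul {m}. Arguments one {m}.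

Section Defs.
Variable L : mlattice.

Definition zero : L := sup (fun _ : L => False).
Definition join (x y : L) : L := sup (fun z => z = x \/ z = y).
Definition meet (x y : L) : L := sup (fun z => le z x /\ le z y).
Definition colon (y x : L) : L := sup (fun a => le (mul a x) y).

Definition compact (c : L) : Prop :=
  forall S : L -> Prop, le c (sup S) ->
    exists T : list L, (forall t, In t T -> S t) /\ le c (sup (fun t => In t T)).

Definition C_lattice : Prop :=
  compact (@one L) /\
  (forall a b : L, compact a -> compact b -> compact (mul a b)) /\
  (forall x : L, exists S : L -> Prop, (forall c, S c -> compact c) /\ x = sup S).

Definition prime (p : L) : Prop :=
  p <> @one L /\ forall x y : L, le (mul x y) p -> le x p \/ le y p.

Definition domain : Prop := prime (zero).

Definition principal (x : L) : Prop :=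
  (forall y z : L, meet y (mul z x) = mul (meet (colon y x) z) x) /\
  (forall y z : L, join y (colon z x) = colon (join (mul y x) z) x).

Definition principally_generated : Prop :=
  forall x : L, exists S : L -> Prop, (forall c, S c -> principal c) /\ x = sup S.

Definition sharp : Prop :=
  forall a1 a2 b : L, le (mul a1 a2) b ->
    exists b1 b2, le a1 b1 /\ le a2 b2 /\ b = mul b1 b2.

Definition pseudo_Dedekind : Prop :=
  forall x a : L, principal x -> principal (colon x a).

End Defs.

(* Main.v *)
Require Import Defs.
From Stdlib Require Import Classical.

Section S.
Context {L : mlattice}.

Lemma ml_le_refl (x : L) : le x x. Proof. apply le_refl. Qed.
Lemma ml_trans (x y z : L) : le x y -> le y z -> le x z. Proof. apply le_trans. Qed.
Lemma ml_anti (x y : L) : le x y -> le y x -> x = y. Proof. apply le_antisym. Qed.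

Lemma zero_le (x : L) : le (zero L) x.
Proof. apply sup_least. intros _ []. Qed.

Lemma mul_mono_r (a y z : L) : le y z -> le (mul a y) (mul a z).
Proof.
  intro H.
  assert (E : z = sup (fun t : L => t = y \/ t = z)).
  { apply ml_anti. apply sup_ub. now right.
    apply sup_least. intros t [->| ->]; auto using ml_le_refl. }
  rewrite E, mul_sup. apply sup_ub. exists y. split; auto.
Qed.

Lemma mul_mono_l (a y z : L) : le y z -> le (mul y a) (mul z a).
Proof. intro H. rewrite (mulC _ y), (mulC _ z). now apply mul_mono_r. Qed.

Lemma mul_zero (a : L) : mul a (zero L) = zero L.
Proof.
  apply ml_anti; [|apply zero_le].
  unfold zero at 1. rewrite mul_sup. apply sup_least. intros t [b [[] _]].
Qed.

Lemma mul_one (a : L) : mul a one = a.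
Proof. rewrite mulC. apply mul1. Qed.

Lemma colon_ub (t y x : L) : le (mul t x) y -> le t (colon L y x).
Proof. intro H. apply sup_ub. exact H. Qed.

Lemma colon_spec (y x : L) : le (mul (colon L y x) x) y.
Proof.
  unfold colon. rewrite mulC, mul_sup. apply sup_least.
  intros t [b [Hb ->]]. rewrite mulC. exact Hb.
Qed.

Lemma meet_l (y z : L) : le (meet L y z) y.
Proof. apply sup_least. intros t [H _]; exact H. Qed.
Lemma meet_r (y z : L) : le (meet L y z) z.
Proof. apply sup_least. intros t [_ H]; exact H. Qed.
Lemma meet_glb (w y z : L) : le w y -> le w z -> le w (meet L y z).
Proof. intros. apply sup_ub. auto. Qed.
Lemma join_l (y z : L) : le y (join L y z).
Proof. apply sup_ub. auto. Qed.
Lemma join_r (y z : L) : le z (join L y z).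
Proof. apply sup_ub. auto. Qed.
Lemma join_lub (w y z : L) : le y w -> le z w -> le (join L y z) w.
Proof. intros. apply sup_least. intros t [-> | ->]; auto. Qed.

Lemma mul_join (c y z : L) : le (mul (join L y z) c) (join L (mul y c) (mul z c)).
Proof.
  rewrite mulC. unfold join at 1. rewrite mul_sup. apply sup_least.
  intros t [b [[-> | ->] ->]]; rewrite mulC; auto using join_l, join_r.
Qed.

Definition cancellative (c : L) := forall t s : L, le (mul t c) (mul s c) -> le t s.

Lemma principal_cancel (x : L) : domain L -> principal L x -> x <> zero L -> cancellative x.
Proof.
  intros [_ Hd] [_ P2] Hx t s H.
  apply colon_ub in H.
  assert (E : join L (mul s x) (zero L) = mul s x).
  { apply ml_anti. apply join_lub. apply ml_le_refl. apply zero_le. apply join_l. }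
  rewrite <- E, <- P2 in H. eapply ml_trans; [exact H|].
  apply join_lub. apply ml_le_refl. apply sup_least. intros a Ha.
  destruct (Hd _ _ Ha) as [Ha'|Ha'].
  - eapply ml_trans; [exact Ha'|apply zero_le].
  - exfalso. apply Hx. apply ml_anti; auto using zero_le.
Qed.

Lemma factor_principal (x b c : L) : principal L x -> cancellative x -> x = mul b c ->
  principal L b.
Proof.
  intros [P1 P2] Cx Ex.
  assert (Cc : cancellative c).
  { intros t s H. apply Cx. rewrite Ex, (mulC _ b c), !mulA. now apply mul_mono_l. }
  assert (K : forall y, colon L (mul y c) x = colon L y b).
  { intro y. apply ml_anti; apply sup_least; intros a Ha; apply colon_ub.
    - apply Cc. rewrite <- mulA, <- Ex. exact Ha.
    - rewrite Ex, mulA. now apply mul_mono_l. }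
  split.
  - intros y z. apply ml_anti.
    + apply Cc. rewrite <- mulA, <- Ex, <- K, <- P1. apply meet_glb.
      * apply mul_mono_l, meet_l.
      * rewrite Ex, mulA. apply mul_mono_l, meet_r.
    + apply meet_glb.
      * eapply ml_trans; [apply mul_mono_l, meet_l|apply colon_spec].
      * apply mul_mono_l, meet_r.
  - intros y z. apply ml_anti.
    + apply join_lub.
      * apply colon_ub, join_l.
      * apply colon_ub. eapply ml_trans; [apply colon_spec|apply join_r].
    + apply sup_least. intros t Ht. rewrite <- K, P2. apply colon_ub.
      rewrite Ex, mulA. eapply ml_trans; [apply mul_mono_l, Ht|].
      eapply ml_trans; [apply mul_join|].
      rewrite <- mulA. apply ml_le_refl.
Qed.

Lemma principal_zero : principal L (zero L).
Proof.
  assert (C : forall z, colon L z (zero L) = one).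
  { intro z. apply ml_anti. apply one_top. apply colon_ub. rewrite mul_zero. apply zero_le. }
  split; intros y z.
  - rewrite !mul_zero. apply ml_anti. apply meet_r. apply zero_le.
  - rewrite !C. apply ml_anti. apply one_top. apply join_r.
Qed.

Lemma principal_one : principal L one.
Proof.
  assert (C : forall z, colon L z one = z).
  { intro z. apply ml_anti. apply sup_least. intros a Ha. now rewrite mul_one in Ha.
    apply colon_ub. rewrite mul_one. apply ml_le_refl. }
  split; intros y z; rewrite ?C, ?mul_one; reflexivity.
Qed.

End S.

Theorem proposition3p2 (L : mlattice) :
  C_lattice L -> domain L -> principally_generated L -> sharp L ->
  pseudo_Dedekind L.
Proof.
  intros _ Hdom _ Hsh x a Hx.
  destruct (Hsh (colon L x a) a x (colon_spec x a)) as [b1 [b2 [H1 [H2 E]]]].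
  assert (Q : colon L x a = b1).
  { apply ml_anti. exact H1. apply colon_ub. rewrite E. now apply mul_mono_r. }
  rewrite Q.
  destruct (classic (x = zero L)) as [Z|Z].
  - rewrite Z in *. destruct Hdom as [_ Hd].
    destruct (Hd b1 b2) as [B|B]. rewrite <- E. apply ml_le_refl.
    + replace b1 with (zero L). apply principal_zero. apply ml_anti; auto using zero_le.
    + rewrite <- Q. replace (colon L (zero L) a) with (@one L). apply principal_one.
      apply ml_anti. apply colon_ub. rewrite mul1. eapply ml_trans; eauto. apply one_top.
  - eapply factor_principal; eauto. apply principal_cancel; auto.
Qed.
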